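(* In the process described in the context, for each item $j$, $\Pr[\text{a medium or tiny blocking event occurs for } j\mid j\in\mathcal R_0]\le O(\alpha^2k^{-1}\log^2(k/\alpha))=o(1)$.
   Context: Consider a $k$-CS-PIP instance: matrix $\vec A\in[0,1]^{m\times n}$ (entries $a_{ij}$), each column having at most $k$ nonzero entries, and $\vec x\in[0,1]^n$ with $\vec A\vec x\le\vec 1$ (an optimal solution of the LP that additionally imposes $\sum_{j:a_{ij}>1/2}x_j\le1$ for every row $i$). Let $\alpha=k^{0.4}$, $\ell=80\log(k/\alpha)$, and for row $i$: $\mathrm{med}(i)=\{j:1/\ell\le a_{ij}\le 1/2\}$, $\mathrm{tiny}(i)=\{j:0<a_{ij}<1/\ell\}$. Let $\mathcal R_0$ contain each item $j$ independently with probability $\alpha x_j/k$. A medium blocking event occurs for $j$ if some row $i$ with $j\in\mathrm{med}(i)$ has $|\mathrm{med}(i)\cap\mathcal R_0|\ge 3$; a tiny blocking event occurs for $j$ if some row $i$ with $j\in\mathrm{tiny}(i)$ has $\sum_{j'\ne j,\ j'\in(\mathrm{med}(i)\cup\mathrm{tiny}(i))\cap\mathcal R_0}a_{ij'}>1-a_{ij}$ or $|\mathrm{med}(i)\cap\mathcal R_0|\ge2$. Asymptotics are as $k\to\infty$. *)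

(* Defs.v *)
From HB Require Import structures.
From mathcomp Require Import all_boot all_order all_algebra.
From mathcomp Require Import all_classical all_reals all_analysis.
Set Implicit Arguments. Unset Strict Implicit. Unset Printing Implicit Defensive.
Import Order.TTheory GRing.Theory Num.Theory.
Import numFieldNormedType.Exports.
Local Open Scope ring_scope.

Section KCSPIP.
Variable R : realType.

Definition alpha (k : nat) : R := powR (k%:R) (2 / 5).
Definition ell (k : nat) : R := 80 * ln (k%:R / alpha k).

Variables (m n : nat).

Definition cspip_instance (k : nat) (A : 'M[R]_(m, n)) (x : 'I_n -> R) : Prop :=
  [/\ (forall i j, 0 <= A i j <= 1),
      (forall j, (#|[set i : 'I_m | A i j != 0%R]| <= k)%N),
      (forall j, 0 <= x j <= 1),
      (forall i, \sum_(j < n) A i j * x j <= 1) &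
      (forall i, \sum_(j < n | A i j > 1/2) x j <= 1)].

Definition med (k : nat) (A : 'M[R]_(m, n)) (i : 'I_m) : {set 'I_n} :=
  [set j | ((ell k)^-1 <= A i j) && (A i j <= 1/2)].
Definition tiny (k : nat) (A : 'M[R]_(m, n)) (i : 'I_m) : {set 'I_n} :=
  [set j | (0 < A i j) && (A i j < (ell k)^-1)].

(* Probability of the outcome R0 = S when each item j is included
   independently with probability p j. *)
Definition probS (p : 'I_n -> R) (S : {set 'I_n}) : R :=
  \prod_(j in S) p j * \prod_(j in ~: S) (1 - p j).

Definition Pr (p : 'I_n -> R) (E : pred {set 'I_n}) : R :=
  \sum_(S : {set 'I_n} | E S) probS p S.

Definition condPr (p : 'I_n -> R) (E : pred {set 'I_n}) (j : 'I_n) : R :=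
  Pr p (fun S => E S && (j \in S)) / Pr p (fun S => j \in S).

Definition incl_prob (k : nat) (x : 'I_n -> R) : 'I_n -> R :=
  fun j => alpha k * x j / k%:R.

Definition medium_block (k : nat) (A : 'M[R]_(m, n)) (j : 'I_n)
  (S : {set 'I_n}) : bool :=
  [exists i, (j \in med k A i) && (3 <= #|med k A i :&: S|)%N].

Definition tiny_block (k : nat) (A : 'M[R]_(m, n)) (j : 'I_n)
  (S : {set 'I_n}) : bool :=
  [exists i, (j \in tiny k A i) &&
     ((\sum_(j' in (med k A i :|: tiny k A i) :&: S | j' != j) A i j'
          > 1 - A i j)
      || (2 <= #|med k A i :&: S|)%N)].

End KCSPIP.

Definition lemma3_bound (R : realType) (k : nat) : R :=
  (alpha R k) ^+ 2 / k%:R * (ln (k%:R / alpha R k)) ^+ 2.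

(* Main.v *)
Require Import Defs.
From HB Require Import structures.
From mathcomp Require Import all_boot all_order all_algebra.
From mathcomp Require Import all_classical all_reals all_analysis.
From mathcomp.algebra_tactics Require Import ring lra.
Import Order.TTheory GRing.Theory Num.Theory.
Import numFieldNormedType.Exports.
Local Open Scope classical_set_scope.
Local Open Scope ring_scope.

Section Prob.
Variable R : realType.
Variable n : nat.
Implicit Types (p : 'I_n -> R) (S D : {set 'I_n}).

Lemma prod_ind S D : \prod_(t in D) ((t \in S)%:R : R) = (D \subset S)%:R.
Proof.
case: (boolP (D \subset S)) => H.
  by rewrite big1 // => t tD; rewrite (fintype.subsetP H t tD).
have [t /andP [tD tS]] : exists t, (t \in D) && (t \notin S).
  apply/existsP; move: H; apply: contraNT; rewrite negb_exists => /forallP H.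
  by apply/fintype.subsetP => t tD; have := H t; rewrite tD /= negbK.
by rewrite (bigD1 t) //= (negbTE tS) mul0r.
Qed.

Lemma probS_ind p S D :
  probS p S * (D \subset S)%:R =
  \prod_t (if t \in S then p t else if t \in D then 0 else 1 - p t).
Proof.
rewrite [RHS](bigID (fun t => t \in S)) /= /probS -mulrA.
congr (_ * _).
  by apply: eq_big => // t tS; rewrite tS.
rewrite [RHS](eq_bigr (fun t => if t \in D then 0 else 1 - p t)); last first.
  by move=> t /negbTE ->.
case: (boolP (D \subset S)) => H.
  rewrite mulr1; apply: eq_big => t; first by rewrite inE.
  move=> tS; case: ifP => // tD; by move: tS; rewrite inE (fintype.subsetP H t tD).
rewrite mulr0.
have [t /andP [tD tS]] : exists t, (t \in D) && (t \notin S).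
  apply/existsP; move: H; apply: contraNT; rewrite negb_exists => /forallP H.
  by apply/fintype.subsetP => t tD; have := H t; rewrite tD /= negbK.
by rewrite (bigD1 t) //= tD mul0r.
Qed.

Lemma sum_probS_prod p D :
  \sum_(S : {set 'I_n}) probS p S * \prod_(t in D) ((t \in S)%:R : R)
  = \prod_(t in D) p t.
Proof.
rewrite (eq_bigr (fun S => \prod_t (if t \in S then p t else if t \in D then 0 else 1 - p t))); last first.
  by move=> S _; rewrite prod_ind probS_ind.
rewrite -(@bigA_distr _ _ 1 _ _ _ (fun t => p t) (fun t => if t \in D then 0 else 1 - p t)).
rewrite [RHS]big_mkcond; apply: eq_bigr => t _.
case: (t \in D) => /=.
  by rewrite addr0. by rewrite addrC subrK.
Qed.

Lemma Pr_j p (j : 'I_n) : Pr p (fun S => j \in S) = p j.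
Proof.
have := sum_probS_prod p [set j]; rewrite big_set1 => <-.
rewrite /Pr big_mkcond /=; apply: eq_bigr => S _. rewrite (big_pred1 j); last by move=> t; rewrite inE. by case: (j \in S); rewrite ?mulr1 ?mulr0.
Qed.

Lemma probS_ge0 p S : (forall t, 0 <= p t <= 1) -> 0 <= probS p S.
Proof.
move=> hp; rewrite /probS; apply: mulr_ge0; apply: prodr_ge0 => t _.
  by case/andP: (hp t).
by case/andP: (hp t) => _ h; rewrite subr_ge0.
Qed.

End Prob.

Section Reals.
Variable R : realType.

Lemma alpha_exp k : (0 < k)%N -> alpha R k = expR (2/5 * ln (k%:R : R)).
Proof. by move=> hk; rewrite /alpha /powR pnatr_eq0 (negbTE (lt0n_neq0 hk)). Qed.

Lemma alpha_gt0 k : (0 < k)%N -> 0 < alpha R k.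
Proof. by move=> hk; rewrite alpha_exp // expR_gt0. Qed.

Lemma alpha_le k : (0 < k)%N -> alpha R k <= k%:R.
Proof.
move=> hk; rewrite /alpha; apply: ler1_powR; last by lra.
by rewrite ler1n.
Qed.

Lemma ln_kalpha k : (0 < k)%N -> ln ((k%:R : R) / alpha R k) = 3/5 * ln (k%:R : R).
Proof.
move=> hk; rewrite alpha_exp // ln_div ?posrE ?ltr0n ?expR_gt0 // expRK.
lra.
Qed.

Lemma ln_ge x : 0 < x -> 1 - x^-1 <= ln (x : R).
Proof.
move=> hx; have := expR_ge1Dx (- ln x).
by rewrite expRN lnK ?posrE //; lra.
Qed.

Lemma ln_k_ge k : (2 <= k)%N -> 1/2 <= ln (k%:R : R).
Proof.
move=> hk; have k0 : (0 : R) < k%:R by rewrite ltr0n; case: k hk.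
have h := ln_ge _ k0.
have h2 : (2 : R) <= k%:R by rewrite ler_nat.
have : (k%:R : R)^-1 <= 2^-1 by rewrite lef_pV2 ?posrE //; lra.
lra.
Qed.

Lemma ell_ge k : (2 <= k)%N -> 4 <= ell R k.
Proof.
move=> hk; rewrite /ell ln_kalpha; last by case: k hk.
have := ln_k_ge _ hk; lra.
Qed.

End Reals.

Section Main.
Variable R : realType.
Variables (k m n : nat) (A : 'M[R]_(m, n)) (x : 'I_n -> R) (j : 'I_n).
Hypothesis hinst : cspip_instance k A x.
Hypothesis hk : (2 <= k)%N.

Let l := ell R k.
Let p := incl_prob k x.

Lemma l_ge4 : 4 <= l. Proof. exact: ell_ge. Qed.

Lemma A01 i t : 0 <= A i t <= 1.
Proof. by case: hinst. Qed.

Lemma x01 t : 0 <= x t <= 1.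
Proof. by case: hinst. Qed.

Lemma p01 t : 0 <= p t <= 1.
Proof.
have k0 : (0 : R) < k%:R by rewrite ltr0n; case: k hk.
have a0 := alpha_gt0 R k (ltnW hk).
have ak := alpha_le R k (ltnW hk).
have := x01 t => /andP [x0 x1].
rewrite /p /incl_prob; apply/andP; split.
  apply: divr_ge0; [apply: mulr_ge0 | ]; lra.
rewrite ler_pdivrMr // mul1r.
have : alpha R k * x t <= alpha R k * 1 by rewrite ler_pM2l.
lra.
Qed.

Definition c i t : R :=
  if (t != j) && (t \in med k A i :|: tiny k A i) then A i t else 0.
Definition s (S : {set 'I_n}) t : R := (t \in S)%:R.
Definition U i S :=
  \sum_t1 \sum_(t2 | t2 != t1) c i t1 * c i t2 * (s S t1 * s S t2).

Lemma c_ge0 i t : 0 <= c i t.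
Proof. by rewrite /c; case: ifP => // _; case/andP: (A01 i t). Qed.

Lemma c_leA i t : c i t <= A i t.
Proof. by rewrite /c; case: ifP => // _; case/andP: (A01 i t). Qed.

Lemma c_le_half i t : c i t <= 1/2.
Proof.
rewrite /c; case: ifP => [/andP [_ ]|_]; last by lra.
have l4 := l_ge4.
rewrite !inE => /orP [/andP [_ h] | /andP [_ h]] //.
have : l^-1 <= 4^-1 by rewrite lef_pV2 ?posrE //; lra.
rewrite -/l in h; lra.
Qed.

Lemma s01 S t : 0 <= s S t <= 1.
Proof. by rewrite /s; case: (t \in S) => /=; lra. Qed.

Lemma ss S t : s S t * s S t = s S t.
Proof. by rewrite /s; case: (t \in S); rewrite ?mulr1 ?mulr0. Qed.

Lemma term_ge0 i S t1 t2 : 0 <= c i t1 * c i t2 * (s S t1 * s S t2).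
Proof.
have := s01 S t1; have := s01 S t2; have := c_ge0 i t1; have := c_ge0 i t2.
move=> h1 h2 /andP [h3 _] /andP [h4 _].
by apply: mulr_ge0; apply: mulr_ge0.
Qed.

Lemma U_ge0 i S : 0 <= U i S.
Proof. by apply: sumr_ge0 => t1 _; apply: sumr_ge0 => t2 _; apply: term_ge0. Qed.

Lemma U_ge_term i S t1 t2 : t2 != t1 ->
  c i t1 * c i t2 * (s S t1 * s S t2) <= U i S.
Proof.
move=> ne; rewrite /U (bigD1 t1) //= (bigD1 t2) //=.
rewrite -addrA lerDl.
apply: addr_ge0.
  by apply: sumr_ge0 => t _; apply: term_ge0.
by apply: sumr_ge0 => t _; apply: sumr_ge0 => t' _; apply: term_ge0.
Qed.


Definition T i S := \sum_t c i t * s S t.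

Lemma U_eq i S : U i S = T i S ^+ 2 - \sum_t c i t * (c i t * s S t).
Proof.
rewrite /T expr2 mulr_suml.
rewrite (eq_bigr (fun t1 => c i t1 * (c i t1 * s S t1) +
    \sum_(t2 | t2 != t1) c i t1 * c i t2 * (s S t1 * s S t2))); last first.
  move=> t1 _; rewrite mulr_sumr (bigD1 t1) //=; congr (_ + _).
    by rewrite mulrACA ss mulrA.
  by apply: eq_bigr => t2 _; ring.
by rewrite big_split /= addrC addrK.
Qed.

Lemma T_eq i S :
  T i S = \sum_(j' in (med k A i :|: tiny k A i) :&: S | j' != j) A i j'.
Proof.
rewrite /T [RHS]big_mkcond; apply: eq_bigr => t _.
rewrite /c /s.
rewrite finset.in_setI finset.in_setU; by case: (t \in S); case: (t != j); case: (t \in med k A i); case: (t \in tiny k A i); rewrite /= ?mulr1 ?mulr0.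
Qed.

Lemma T_ge0 i S : 0 <= T i S.
Proof.
apply: sumr_ge0 => t _; apply: mulr_ge0; first exact: c_ge0.
by case/andP: (s01 S t).
Qed.

Lemma two_med i S : (2 <= #|(med k A i :&: S) :\ j|)%N -> 1 <= l ^+ 2 * U i S.
Proof.
move/card_gt1P => [t1 [t2 [h1 h2 ne]]].
have l4 := l_ge4.
have hc : forall t, t \in (med k A i :&: S) :\ j -> l^-1 <= c i t /\ s S t = 1.
  move=> t; rewrite !inE => /and3P [tj /andP [h h'] tS].
  rewrite /c /s tj tS finset.in_setU.
  by rewrite [X in X || _]inE h h'.
have [c1 s1] := hc t1 h1; have [c2 s2] := hc t2 h2.
have := U_ge_term i S t1 t2; rewrite eq_sym ne s1 s2 mulr1 => /(_ isT) hU.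
have hl : l^-1 * l = 1 by rewrite mulVf //; lra.
have hl0 : 0 <= l^-1 by rewrite invr_ge0; lra.
have : l^-1 * l^-1 <= c i t1 * c i t2 by apply: ler_pM.
nra.
Qed.

Lemma sum_case i S : A i j < l^-1 ->
  1 - A i j < \sum_(j' in (med k A i :|: tiny k A i) :&: S | j' != j) A i j' ->
  1 <= l ^+ 2 * U i S.
Proof.
rewrite -T_eq => hA hT.
have l4 := l_ge4.
have : l^-1 <= 4^-1 by rewrite lef_pV2 ?posrE //; lra.
move=> hl.
have hW : \sum_t c i t * (c i t * s S t) <= 2^-1 * T i S.
  rewrite /T mulr_sumr; apply: ler_sum => t _.
  apply: ler_wpM2r; last by have := c_le_half i t; lra.
  by apply: mulr_ge0; [exact: c_ge0 | case/andP: (s01 S t)].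
have hU := U_eq i S.
have hU3 : 3/16 <= U i S by nra.
rewrite expr2; nra.
Qed.

Lemma block_bound (S : {set 'I_n}) : j \in S ->
  medium_block k A j S || tiny_block k A j S ->
  1 <= l ^+ 2 * \sum_(i in [set i | A i j != 0]%SET) U i S.
Proof.
move=> jS hE.
have l4 := l_ge4.
have hl0 : 0 < l^-1 by rewrite invr_gt0; lra.
suff [i [hi h]] : exists i, A i j != 0 /\ 1 <= l ^+ 2 * U i S.
  apply: (le_trans h); apply: ler_wpM2l; first by rewrite expr2; nra.
  rewrite (bigD1 i) ?inE //= lerDl; apply: sumr_ge0 => i' _; exact: U_ge0.
case/orP: hE => [/existsP [i /andP [hj hc]] | /existsP [i /andP [hj hc]]].
  exists i; split.
    move: hj; rewrite inE -/l => /andP [h _]; apply/negP => /eqP h0.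
    by rewrite h0 in h; lra.
  apply: two_med.
  have := cardsD1 j (med k A i :&: S); rewrite finset.in_setI hj jS /= => e.
  by rewrite e add1n ltnS in hc.
have [hA0 hAl] : 0 < A i j /\ A i j < l^-1.
  by move: hj; rewrite inE -/l => /andP [h1 h2].
exists i; split; first by apply/negP => /eqP h0; rewrite h0 in hA0; lra.
case/orP: hc => [hs | hcard]; first exact: sum_case.
apply: two_med.
have jm : j \notin med k A i.
  by rewrite inE -/l; apply/negP => /andP [h _]; lra.
have := cardsD1 j (med k A i :&: S); rewrite finset.in_setI (negbTE jm) /= => e.
by rewrite e add0n in hcard.
Qed.

Lemma probS_p_ge0 S : 0 <= probS p S.
Proof. by apply: probS_ge0 => t; exact: p01. Qed.

Lemma EU i : \sum_S probS p S * (s S j * U i S) <= p j * (\sum_t c i t * p t) ^+ 2.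
Proof.
have step : forall S, probS p S * (s S j * U i S) = \sum_t1 \sum_(t2 | t2 != t1)
    c i t1 * c i t2 * (probS p S * (s S j * (s S t1 * s S t2))).
  move=> S; rewrite /U mulr_sumr mulr_sumr; apply: eq_bigr => t1 _.
  rewrite mulr_sumr mulr_sumr; apply: eq_bigr => t2 _; ring.
rewrite (eq_bigr _ (fun S _ => step S)).
rewrite exchange_big /=.
have hpp : forall t, 0 <= p t by move=> t; case/andP: (p01 t).
have cp0 : forall t, 0 <= c i t * p t by move=> t; apply: mulr_ge0; [exact: c_ge0 | exact: hpp].
have -> : p j * (\sum_t c i t * p t) ^+ 2 =
   \sum_t1 \sum_t2 c i t1 * c i t2 * (p j * (p t1 * p t2)).
  rewrite expr2 mulr_suml mulr_sumr; apply: eq_bigr => t1 _.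
  rewrite mulr_sumr mulr_sumr; apply: eq_bigr => t2 _; ring.
apply: ler_sum => t1 _.
rewrite exchange_big /=.
apply: (@le_trans _ _ (\sum_(t2 | t2 != t1) c i t1 * c i t2 * (p j * (p t1 * p t2)))).
  apply: ler_sum => t2 ne.
  rewrite -mulr_sumr.
  case: (eqVneq t1 j) => [-> | n1].
    by rewrite /c eqxx /= !mul0r.
  case: (eqVneq t2 j) => [-> | n2].
    by rewrite /c eqxx /= mulr0 !mul0r.
  apply: ler_wpM2l; first by apply: mulr_ge0; exact: c_ge0.
  have := @sum_probS_prod R n p (j |: (t1 |: [set t2])).
  rewrite big_setU1 /=; last by rewrite !inE negb_or eq_sym n1 eq_sym n2.
  rewrite big_setU1 /=; last by rewrite !inE eq_sym.
  rewrite big_set1 => <-.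
  rewrite le_eqVlt; apply/orP; left; apply/eqP; apply: eq_bigr => S _.
  rewrite big_setU1 /=; last by rewrite !inE negb_or eq_sym n1 eq_sym n2.
  rewrite big_setU1 /=; last by rewrite !inE eq_sym.
  by rewrite (big_pred1 t2) // => t; rewrite inE.
rewrite [X in _ <= X](bigD1 t1) //= lerDr.
apply: mulr_ge0; first by apply: mulr_ge0; exact: c_ge0.
apply: mulr_ge0; first exact: hpp.
by apply: mulr_ge0; exact: hpp.
Qed.

Lemma sum_cp i : 0 <= \sum_t c i t * p t <= alpha R k / k%:R.
Proof.
have hpp : forall t, 0 <= p t by move=> t; case/andP: (p01 t).
have k0 : (0 : R) < k%:R by rewrite ltr0n; case: k hk.
have a0 := alpha_gt0 R k (ltnW hk).
apply/andP; split.
  by apply: sumr_ge0 => t _; apply: mulr_ge0; [exact: c_ge0 | exact: hpp].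
apply: (@le_trans _ _ (\sum_t A i t * p t)).
  by apply: ler_sum => t _; apply: ler_wpM2r; [exact: hpp | exact: c_leA].
have -> : \sum_t A i t * p t = alpha R k / k%:R * \sum_t A i t * x t.
  rewrite mulr_sumr; apply: eq_bigr => t _; rewrite /p /incl_prob; field.
  by rewrite lt0r_neq0.
have hr : \sum_t A i t * x t <= 1 by case: hinst.
rewrite -[X in _ <= X]mulr1; apply: ler_wpM2l => //.
by apply: divr_ge0; lra.
Qed.

Lemma main_bound :
  condPr p (fun S => medium_block k A j S || tiny_block k A j S) j
  <= 6400 * lemma3_bound R k.
Proof.
have k0 : (0 : R) < k%:R by rewrite ltr0n; case: k hk.
have a0 := alpha_gt0 R k (ltnW hk).
have b0 : 0 <= lemma3_bound R k.
  rewrite /lemma3_bound; apply: mulr_ge0; last exact: sqr_ge0.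
  by apply: divr_ge0; [exact: sqr_ge0 | lra].
rewrite /condPr Pr_j.
have /andP [pj0 pj1] := p01 j.
case: (eqVneq (p j) 0) => [-> | pjn0].
  by rewrite invr0 mulr0; lra.
have pjp : 0 < p j by rewrite lt0r pjn0.
rewrite ler_pdivrMr //.
set N := [set i | A i j != 0]%SET.
have l4 := l_ge4.
have H1 : Pr p (fun S => (medium_block k A j S || tiny_block k A j S) && (j \in S))
   <= \sum_S probS p S * (s S j * (l ^+ 2 * \sum_(i in N) U i S)).
  rewrite /Pr big_mkcond; apply: ler_sum => S _; case: ifP => [/andP [hE jS] | _].
    rewrite /s jS mul1r -{1}(mulr1 (probS p S)); apply: ler_wpM2l.
      exact: probS_p_ge0.
    exact: block_bound.
  apply: mulr_ge0; first exact: probS_p_ge0.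
  apply: mulr_ge0; first by case/andP: (s01 S j).
  apply: mulr_ge0; first by rewrite expr2; nra.
  by apply: sumr_ge0 => i _; exact: U_ge0.
have H2 : \sum_S probS p S * (s S j * (l ^+ 2 * \sum_(i in N) U i S)) =
    l ^+ 2 * \sum_(i in N) \sum_S probS p S * (s S j * U i S).
  rewrite exchange_big mulr_sumr; apply: eq_bigr => S _.
  rewrite !mulr_sumr; apply: eq_bigr => i _; ring.
have H3 : \sum_(i in N) \sum_S probS p S * (s S j * U i S)
    <= \sum_(i in N) p j * (alpha R k / k%:R) ^+ 2.
  apply: ler_sum => i _; apply: (le_trans (EU i)); apply: ler_wpM2l => //.
  have /andP [h1 h2] := sum_cp i.
  by rewrite !expr2; apply: ler_pM.
rewrite sumr_const in H3.
have hN : (#|N|%:R : R) <= k%:R.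
  rewrite ler_nat; case: hinst => _ hc _ _ _; exact: hc j.
have H4 : p j * (alpha R k / k%:R) ^+ 2 * #|N|%:R <= p j * (alpha R k / k%:R) ^+ 2 * k%:R.
  apply: ler_wpM2l => //; apply: mulr_ge0 => //; exact: sqr_ge0.
have Hl : 0 <= l ^+ 2 by exact: sqr_ge0.
have E : l ^+ 2 * (p j * (alpha R k / k%:R) ^+ 2 * k%:R) = 6400 * lemma3_bound R k * p j.
  rewrite /l /ell /lemma3_bound; field; lra.
rewrite H2 in H1.
apply: (le_trans H1).
apply: (@le_trans _ _ (l ^+ 2 * (p j * (alpha R k / k%:R) ^+ 2 * k%:R))); last first.
  by rewrite E.
apply: ler_wpM2l => //.
apply: (le_trans H3). by rewrite [X in X <= _]mulr_natr in H4.
Qed.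

End Main.

Section Lim.
Variable R : realType.

Lemma bound_le k : (2 <= k)%N -> lemma3_bound R k <= 270 / ln (k%:R : R).
Proof.
move=> hk.
have k0 : (0 : R) < k%:R by rewrite ltr0n; case: k hk.
set L := ln (k%:R : R).
have L2 : 1/2 <= L := ln_k_ge R k hk.
rewrite /lemma3_bound ln_kalpha ?(ltnW hk) // alpha_exp ?(ltnW hk) //.
have hk' : (k%:R : R) = expR L by rewrite /L lnK // posrE.
set E := expR (L / 5).
have hE : (expR (2 / 5 * L)) ^+ 2 / k%:R = E^-1.
  rewrite hk' expr2 -expRD /E -!expRN -expRD; congr (expR _); lra.
rewrite hE.
have E0 : 0 < E by exact: expR_gt0.
have h3 : 1 + (L / 5) ^+ 3 / (3`!)%:R <= E by apply: expR_ge1Dxn; lra.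
have f3 : ((3`!)%:R : R) = 6 by [].
rewrite f3 in h3.
have L0 : 0 < L by lra.
rewrite -/L mulrC ler_pdivrMr // [X in _ <= X]mulrAC ler_pdivlMr //.
nra.
Qed.

Lemma bound_ge0 k : (2 <= k)%N -> 0 <= lemma3_bound R k.
Proof.
move=> hk; have k0 : (0 : R) < k%:R by rewrite ltr0n; case: k hk.
rewrite /lemma3_bound; apply: mulr_ge0; last exact: sqr_ge0.
by apply: divr_ge0; [exact: sqr_ge0 | lra].
Qed.

Lemma bound_cvg : lemma3_bound R @ \oo --> (0 : R).
Proof.
apply/cvgrPdist_lt => e e0.
set y := expR (270 / e).
exists (maxn 2 (Num.truncn y).+1) => // k /= hk.
have hk2 : (2 <= k)%N by move: hk; rewrite geq_max => /andP [].
have hky : ((Num.truncn y).+1 <= k)%N by move: hk; rewrite geq_max => /andP [].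
have k0 : (0 : R) < k%:R by rewrite ltr0n; case: k hk2 {hk hky}.
have yk : y < k%:R.
  apply: (lt_le_trans (truncnS_gt y)); by rewrite ler_nat.
have hL : 270 / e < ln (k%:R : R).
  by rewrite -ltr_expR lnK // posrE.
rewrite sub0r normrN ger0_norm; last exact: bound_ge0.
apply: (le_lt_trans (bound_le _ hk2)).
have L0 : 0 < ln (k%:R : R) by apply: lt_trans hL; apply: divr_gt0.
rewrite ltr_pdivrMr //.
by rewrite ltr_pdivrMr // mulrC in hL.
Qed.

End Lim.

Theorem lemma3 (R : realType) :
  (exists C : R, exists K0 : nat,
     forall k : nat, (K0 <= k)%N ->
     forall (m n : nat) (A : 'M[R]_(m, n)) (x : 'I_n -> R),
       cspip_instance k A x ->
       forall j : 'I_n,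
         condPr (incl_prob k x)
           (fun S => medium_block k A j S || tiny_block k A j S) j
         <= C * lemma3_bound R k)
  /\ (lemma3_bound R @ \oo --> (0 : R)).
Proof.
split; last exact: bound_cvg.
exists 6400, 2%N => k hk m n A x hinst j.
exact: main_bound.
Qed.
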